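(* Let $Q$ be a multiplicative equivariantly supported reflexive based quantal frame, with base locale $A$, support $\varsigma$ and $\upsilon:Q\to A$, that satisfies the unit laws, and let $G$ be its associated involutive localic graph ($\mathcal O(G_0)=A$, $\mathcal O(G_1)=Q$, $d^*(a)=a\triangleright1_Q$, $i^*(x)=x^*$, $r=d\circ i$, $u^*=\upsilon$, $G_2$ the pullback of $r$ and $d$ with $\mathcal O(G_2)=Q\otimes_AQ$, $m^*(a)=\bigvee_{xy\le a}x\otimes y$). Then $G$ is an open involutive category.
   Context: For a locale $A$, an $A$-$A$-bimodule is a sup-lattice $M$ with actions $a\triangleright m$, $m\triangleleft a$ preserving joins in each variable, with $1_A\triangleright m=m$, $(a\wedge b)\triangleright m=a\triangleright(b\triangleright m)$, $m\triangleleft1_A=m$, $m\triangleleft(a\wedge b)=(m\triangleleft a)\triangleleft b$, $(a\triangleright m)\triangleleft b=a\triangleright(m\triangleleft b)$. An $A$-$A$-quantale is such a $Q$ with associative join-preserving multiplication and $(a\triangleright x)y=a\triangleright(xy)$, $(x\triangleleft a)y=x(a\triangleright y)$, $(xy)\triangleleft a=x(y\triangleleft a)$; involutive if there is a join-preserving $x\mapsto x^*$ with $x^{**}=x$, $(xy)^*=y^*x^*$, $(a\triangleright(x\triangleleft b))^*=b\triangleright(x^*\triangleleft a)$. $1_Q$ is the top. A support is a join-preserving $\varsigma:Q\to A$ with $\varsigma(1_Q)=1_A$, $\varsigma(x)\triangleright y\le xx^*y$, $\varsigma(x)\triangleright x=x$; equivariant if $\varsigma(a\triangleright x)=a\wedge\varsigma(x)$.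 A based quantal frame is an involutive $A$-$A$-quantale which is a frame with $(a\triangleright x)\wedge y=a\triangleright(x\wedge y)$, $(x\triangleleft a)\wedge y=(x\wedge y)\triangleleft a$; reflexive: a frame homomorphism $\upsilon:Q\to A$ with $\upsilon(a\triangleright1_Q)=a=\upsilon(1_Q\triangleleft a)$. $Q\otimes_AQ$ is $Q\otimes Q$ modulo $x\otimes(a\triangleright y)=(x\triangleleft a)\otimes y$; multiplicative: the right adjoint of the induced $\mu_A:Q\otimes_AQ\to Q$ preserves joins. Unit laws: $\bigvee_{xy\le a}\upsilon(x)\triangleright y=a$ for all $a\in Q$. An open involutive category is an internal category in locales (with $u$ as units) with an involution $i$ reversing composition ($i\circ i=\mathrm{id}$, $d\circ i=r$) and with $d$ open. *)

(* Defs.v *)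
(* Sup-lattices, frames, and the involutive localic graph associated with a
   based quantal frame (all locale maps are represented by their inverse-image
   frame homomorphisms, so all diagrams are written contravariantly). *)

Record SupLat := { car :> Type; le : car -> car -> Prop; sup : (car -> Prop) -> car }.
Arguments le {s} _ _.
Arguments sup {s} _.

Definition img {X Y : Type} (f : X -> Y) (S : X -> Prop) : Y -> Prop :=
  fun y => exists x, S x /\ y = f x.

Definition top (L : SupLat) : L := sup (fun _ => True).
Definition meet {L : SupLat} (x y : L) : L := sup (fun z => le z x /\ le z y).

Definition is_frame (L : SupLat) : Prop :=
  (forall x : L, le x x) /\
  (forall x y z : L, le x y -> le y z -> le x z) /\
  (forall x y : L, le x y -> le y x -> x = y) /\
  (forall (S : L -> Prop) x, S x -> le x (sup S)) /\
  (forall (S : L -> Prop) y, (forall x, S x -> le x y) -> le (sup S) y) /\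
  (forall (x : L) (S : L -> Prop), meet x (sup S) = sup (img (meet x) S)).

Record Frame := { frl :> SupLat; frP : is_frame frl }.

Definition preserves_joins {L M : SupLat} (f : L -> M) : Prop :=
  forall S : L -> Prop, f (sup S) = sup (img f S).

Definition frame_hom {L M : SupLat} (f : L -> M) : Prop :=
  preserves_joins f /\ f (top L) = top M /\ forall x y : L, f (meet x y) = meet (f x) (f y).

Definition open_map {L M : SupLat} (f : M -> L) : Prop :=
  exists g : L -> M,
    (forall (x : L) (b : M), le (g x) b <-> le x (f b)) /\
    (forall (x : L) (b : M), g (meet x (f b)) = meet (g x) b).

Section BQF.
Variables (A Q : Frame) (la : A -> Q -> Q) (ra : Q -> A -> Q)
          (mul : Q -> Q -> Q) (st : Q -> Q) (vs ups : Q -> A).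

Definition is_bimodule : Prop :=
  (forall (S : A -> Prop) (m : Q), la (sup S) m = sup (img (fun a => la a m) S)) /\
  (forall (a : A) (S : Q -> Prop), la a (sup S) = sup (img (la a) S)) /\
  (forall (S : Q -> Prop) (a : A), ra (sup S) a = sup (img (fun m => ra m a) S)) /\
  (forall (m : Q) (S : A -> Prop), ra m (sup S) = sup (img (ra m) S)) /\
  (forall m, la (top A) m = m) /\
  (forall a b m, la (meet a b) m = la a (la b m)) /\
  (forall m, ra m (top A) = m) /\
  (forall a b m, ra m (meet a b) = ra (ra m a) b) /\
  (forall a b m, ra (la a m) b = la a (ra m b)).

Definition is_AA_quantale : Prop :=
  is_bimodule /\
  (forall x y z, mul (mul x y) z = mul x (mul y z)) /\
  (forall (S : Q -> Prop) y, mul (sup S) y = sup (img (fun x => mul x y) S)) /\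
  (forall x (S : Q -> Prop), mul x (sup S) = sup (img (mul x) S)) /\
  (forall a x y, mul (la a x) y = la a (mul x y)) /\
  (forall a x y, mul (ra x a) y = mul x (la a y)) /\
  (forall a x y, ra (mul x y) a = mul x (ra y a)).

Definition is_involutive : Prop :=
  preserves_joins st /\
  (forall x, st (st x) = x) /\
  (forall x y, st (mul x y) = mul (st y) (st x)) /\
  (forall a b x, st (la a (ra x b)) = la b (ra (st x) a)).

(** based quantal frame (Q is a frame by its type) *)
Definition is_based_quantal_frame : Prop :=
  is_AA_quantale /\ is_involutive /\
  (forall a x y, meet (la a x) y = la a (meet x y)) /\
  (forall a x y, meet (ra x a) y = ra (meet x y) a).

Definition is_support : Prop :=
  preserves_joins vs /\ vs (top Q) = top A /\
  (forall x y, le (la (vs x) y) (mul (mul x (st x)) y)) /\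
  (forall x, la (vs x) x = x).

Definition is_equivariant_support : Prop :=
  is_support /\ forall a x, vs (la a x) = meet a (vs x).

Definition is_reflexive : Prop :=
  frame_hom ups /\
  (forall a, ups (la a (top Q)) = a) /\
  (forall a, ups (ra (top Q) a) = a).

(** Q (x)_A Q : down-closed subsets of Q x Q closed under joins in each
    variable and saturated for x (x) (a |> y) = (x <| a) (x) y. *)
Definition tideal2 (I : Q * Q -> Prop) : Prop :=
  (forall x y x' y', I (x, y) -> le x' x -> le y' y -> I (x', y')) /\
  (forall (S : Q -> Prop) y, (forall x, S x -> I (x, y)) -> I (sup S, y)) /\
  (forall x (S : Q -> Prop), (forall y, S y -> I (x, y)) -> I (x, sup S)) /\
  (forall x a y, I (ra x a, y) <-> I (x, la a y)).

Definition iclos2 (P : Q * Q -> Prop) : Q * Q -> Prop :=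
  fun p => forall J, tideal2 J -> (forall q, P q -> J q) -> J p.

Lemma iclos2_ideal P : tideal2 (iclos2 P).
Proof.
  unfold iclos2; split; [|split; [|split]].
  - intros x y x' y' H h1 h2 J HJ HP. pose proof HJ as HJ'. destruct HJ as [D _]. exact (D _ _ _ _ (H J HJ' HP) h1 h2).
  - intros S y H J HJ HP. destruct HJ as [D [L [R B]]].
    apply L. intros x Sx. exact (H x Sx J (conj D (conj L (conj R B))) HP).
  - intros x S H J HJ HP. destruct HJ as [D [L [R B]]].
    apply R. intros y Sy. exact (H y Sy J (conj D (conj L (conj R B))) HP).
  - intros x a y; split; intros H J HJ HP; destruct HJ as [D [L [R B]]];
      apply B; exact (H J (conj D (conj L (conj R B))) HP).
Qed.

Definition T2 : SupLat :=
  {| car := {I : Q * Q -> Prop | tideal2 I};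
     le := fun I J => forall p, proj1_sig I p -> proj1_sig J p;
     sup := fun S => exist _ (iclos2 (fun p => exists I, S I /\ proj1_sig I p))
                           (iclos2_ideal _) |}.

Definition tens (x y : Q) : T2 := exist _ (iclos2 (fun p => p = (x, y))) (iclos2_ideal _).

Definition tideal3 (I : Q * Q * Q -> Prop) : Prop :=
  (forall x y z x' y' z', I (x, y, z) -> le x' x -> le y' y -> le z' z -> I (x', y', z')) /\
  (forall (S : Q -> Prop) y z, (forall x, S x -> I (x, y, z)) -> I (sup S, y, z)) /\
  (forall x (S : Q -> Prop) z, (forall y, S y -> I (x, y, z)) -> I (x, sup S, z)) /\
  (forall x y (S : Q -> Prop), (forall z, S z -> I (x, y, z)) -> I (x, y, sup S)) /\
  (forall x a y z, I (ra x a, y, z) <-> I (x, la a y, z)) /\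
  (forall x y a z, I (x, ra y a, z) <-> I (x, y, la a z)).

Definition iclos3 (P : Q * Q * Q -> Prop) : Q * Q * Q -> Prop :=
  fun p => forall J, tideal3 J -> (forall q, P q -> J q) -> J p.

Lemma iclos3_ideal P : tideal3 (iclos3 P).
Proof.
  unfold iclos3; split; [|split; [|split; [|split; [|split]]]].
  - intros x y z x' y' z' H h1 h2 h3 J HJ HP. pose proof HJ as HJ'.
    destruct HJ as [D _]. exact (D _ _ _ _ _ _ (H J HJ' HP) h1 h2 h3).
  - intros S y z H J HJ HP. pose proof HJ as HJ'. destruct HJ as [_ [L _]].
    apply L. intros x Sx. exact (H x Sx J HJ' HP).
  - intros x S z H J HJ HP. pose proof HJ as HJ'. destruct HJ as [_ [_ [M _]]].
    apply M. intros y Sy. exact (H y Sy J HJ' HP).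
  - intros x y S H J HJ HP. pose proof HJ as HJ'. destruct HJ as [_ [_ [_ [R _]]]].
    apply R. intros z Sz. exact (H z Sz J HJ' HP).
  - intros x a y z; split; intros H J HJ HP; pose proof HJ as HJ';
      destruct HJ as [_ [_ [_ [_ [B _]]]]]; apply B; exact (H J HJ' HP).
  - intros x y a z; split; intros H J HJ HP; pose proof HJ as HJ';
      destruct HJ as [_ [_ [_ [_ [_ B]]]]]; apply B; exact (H J HJ' HP).
Qed.

Definition T3 : SupLat :=
  {| car := {I : Q * Q * Q -> Prop | tideal3 I};
     le := fun I J => forall p, proj1_sig I p -> proj1_sig J p;
     sup := fun S => exist _ (iclos3 (fun p => exists I, S I /\ proj1_sig I p))
                           (iclos3_ideal _) |}.

Definition tens3 (x y z : Q) : T3 :=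
  exist _ (iclos3 (fun p => p = (x, y, z))) (iclos3_ideal _).

Definition tlift (B : SupLat) (h : Q -> Q -> B) (I : T2) : B :=
  sup (fun b => exists x y, proj1_sig I (x, y) /\ b = h x y).

Definition muA : T2 -> Q := tlift Q mul.
Definition muA_radj (a : Q) : T2 := sup (fun I : T2 => le (muA I) a).
Definition is_multiplicative : Prop := preserves_joins muA_radj.

Definition unit_laws : Prop :=
  forall a : Q, sup (fun z => exists x y, le (mul x y) a /\ z = la (ups x) y) = a.

Definition dstar (a : A) : Q := la a (top Q).
Definition istar (x : Q) : Q := st x.
Definition rstar (a : A) : Q := istar (dstar a).
Definition ustar (x : Q) : A := ups x.
Definition p1star (x : Q) : T2 := tens x (top Q).
Definition p2star (y : Q) : T2 := tens (top Q) y.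
Definition mstar (a : Q) : T2 :=
  sup (fun t : T2 => exists x y, le (mul x y) a /\ t = tens x y).

(** inverse image of a pairing <f, g> : X -> G_2 from f^*, g^* : Q -> O(X) *)
Definition pair_star (B : SupLat) (f g : Q -> B) : T2 -> B :=
  tlift B (fun x y => meet (f x) (g y)).

Definition mxid_star : T2 -> T3 :=
  tlift T3 (fun x y => sup (fun t : T3 => exists x1 x2,
                              proj1_sig (mstar x) (x1, x2) /\ t = tens3 x1 x2 y)).
Definition idxm_star : T2 -> T3 :=
  tlift T3 (fun x y => sup (fun t : T3 => exists y1 y2,
                              proj1_sig (mstar y) (y1, y2) /\ t = tens3 x y1 y2)).

Definition open_involutive_category : Prop :=
  frame_hom dstar /\ frame_hom rstar /\ frame_hom ustar /\ frame_hom istar /\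
  frame_hom p1star /\ frame_hom p2star /\ frame_hom mstar /\
  (* G_2 sits over the pullback square: r o pi1 = d o pi2 *)
  (forall a, p1star (rstar a) = p2star (dstar a)) /\
  (* d o u = id, r o u = id *)
  (forall a, ustar (dstar a) = a) /\
  (forall a, ustar (rstar a) = a) /\
  (* d o m = d o pi1, r o m = r o pi2 *)
  (forall a, mstar (dstar a) = p1star (dstar a)) /\
  (forall a, mstar (rstar a) = p2star (rstar a)) /\
  (* associativity: m o (m x id) = m o (id x m) *)
  (forall a, mxid_star (mstar a) = idxm_star (mstar a)) /\
  (* unit laws: m o <u o d, id> = id, m o <id, u o r> = id *)
  (forall a, pair_star Q (fun x => dstar (ustar x)) (fun y => y) (mstar a) = a) /\
  (forall a, pair_star Q (fun x => x) (fun y => rstar (ustar y)) (mstar a) = a) /\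
  (* involution: i o i = id, d o i = r, i o m = m o <i o pi2, i o pi1> *)
  (forall x, istar (istar x) = x) /\
  (forall a, istar (dstar a) = rstar a) /\
  (forall a, mstar (istar a) =
             pair_star T2 (fun x => p2star (istar x)) (fun y => p1star (istar y)) (mstar a)) /\
  open_map dstar.

End BQF.

(* Main.v *)
Require Import Defs.
From Stdlib Require Import FunctionalExtensionality PropExtensionality ProofIrrelevance.

Section Gen.
Variable L : Frame.
Lemma fr_refl (x : L) : le x x. Proof. exact (proj1 (frP L) x). Qed.
Lemma fr_trans (x y z : L) : le x y -> le y z -> le x z.
Proof. exact (proj1 (proj2 (frP L)) x y z). Qed.
Lemma fr_anti (x y : L) : le x y -> le y x -> x = y.
Proof. exact (proj1 (proj2 (proj2 (frP L))) x y). Qed.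
Lemma fr_ub (S : L -> Prop) x : S x -> le x (sup S).
Proof. exact (proj1 (proj2 (proj2 (proj2 (frP L)))) S x). Qed.
Lemma fr_lub (S : L -> Prop) y : (forall x, S x -> le x y) -> le (sup S) y.
Proof. exact (proj1 (proj2 (proj2 (proj2 (proj2 (frP L))))) S y). Qed.
Lemma meet_l (x y : L) : le (meet x y) x.
Proof. apply fr_lub. intros z [h _]; exact h. Qed.
Lemma meet_r (x y : L) : le (meet x y) y.
Proof. apply fr_lub. intros z [_ h]; exact h. Qed.
Lemma meet_glb (x y z : L) : le z x -> le z y -> le z (meet x y).
Proof. intros; apply fr_ub; split; auto. Qed.
Lemma meet_comm (x y : L) : meet x y = meet y x.
Proof. apply fr_anti; apply meet_glb; (apply meet_l || apply meet_r). Qed.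
Lemma top_max (x : L) : le x (top L).
Proof. apply fr_ub; exact I. Qed.
Lemma meet_top_l (y : L) : meet (top L) y = y.
Proof. apply fr_anti. apply meet_r. apply meet_glb. apply top_max. apply fr_refl. Qed.
Lemma meet_top_r (y : L) : meet y (top L) = y.
Proof. rewrite meet_comm; apply meet_top_l. Qed.
Lemma meet_le_iff (x y z : L) : le z (meet x y) <-> le z x /\ le z y.
Proof. split. intros h; split; eapply fr_trans; eauto using meet_l, meet_r.
  intros [h1 h2]; apply meet_glb; auto. Qed.
Lemma meet_mono (x y x' y' : L) : le x x' -> le y y' -> le (meet x y) (meet x' y').
Proof. intros; apply meet_glb; [eapply fr_trans; [apply meet_l|]|eapply fr_trans; [apply meet_r|]]; auto. Qed.
Lemma sup_le_iff (S : L -> Prop) y : le (sup S) y <-> forall x, S x -> le x y.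
Proof. split. intros h x hx; eapply fr_trans; [apply fr_ub; exact hx| exact h]. apply fr_lub. Qed.
End Gen.

Lemma pj_mono (L M : Frame) (f : L -> M) : preserves_joins f -> forall x y, le x y -> le (f x) (f y).
Proof.
  intros H x y h.
  assert (E : sup (fun z => z = x \/ z = y) = y).
  { apply fr_anti. apply fr_lub. intros z [->| ->]; auto using fr_refl. apply fr_ub; auto. }
  rewrite <- E, H. apply fr_ub. exists x; auto.
Qed.

Lemma pj_img_le (L M : Frame) (f : L -> M) (S : L -> Prop) y :
  preserves_joins f -> (forall x, S x -> le (f x) y) -> le (f (sup S)) y.
Proof. intros H h. rewrite H. apply fr_lub. intros z [x [hx ->]]; auto. Qed.

Section Main.
Variables (A Q : Frame) (la : A -> Q -> Q) (ra : Q -> A -> Q)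
          (mul : Q -> Q -> Q) (st : Q -> Q) (vs ups : Q -> A).
Hypothesis HB : is_based_quantal_frame A Q la ra mul st.
Hypothesis HS : is_equivariant_support A Q la mul st vs.
Hypothesis HR : is_reflexive A Q la ra ups.
Hypothesis HM : is_multiplicative A Q la ra mul.
Hypothesis HU : unit_laws A Q la mul ups.

Notation "1" := (top Q).

Ltac dB := destruct HB as [[[H1 [H2 [H3 [H4 [H5 [H6 [H7 [H8 H9]]]]]]]] [Hassoc [Hmsl [Hmsr [Hmla [Hmra Hmra2]]]]]] [[Hstj [Hstst [Hstmul Hstla]]] [Hmeetla Hmeetra]]].

Lemma la_pjl m : preserves_joins (fun a => la a m). Proof. dB. intro; apply H1. Qed.
Lemma la_pjr a : preserves_joins (la a). Proof. dB. intro; apply H2. Qed.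
Lemma ra_pjl a : preserves_joins (fun m => ra m a). Proof. dB. intro; apply H3. Qed.
Lemma ra_pjr m : preserves_joins (ra m). Proof. dB. intro; apply H4. Qed.
Lemma la_top m : la (top A) m = m. Proof. dB. apply H5. Qed.
Lemma la_meet a b m : la (meet a b) m = la a (la b m). Proof. dB. apply H6. Qed.
Lemma ra_top m : ra m (top A) = m. Proof. dB. apply H7. Qed.
Lemma ra_meet a b m : ra m (meet a b) = ra (ra m a) b. Proof. dB. apply H8. Qed.
Lemma la_ra a b m : ra (la a m) b = la a (ra m b). Proof. dB. apply H9. Qed.
Lemma massoc x y z : mul (mul x y) z = mul x (mul y z). Proof. dB. apply Hassoc. Qed.
Lemma mul_pjl y : preserves_joins (fun x => mul x y). Proof. dB. intro; apply Hmsl. Qed.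
Lemma mul_pjr x : preserves_joins (mul x). Proof. dB. intro; apply Hmsr. Qed.
Lemma mul_la a x y : mul (la a x) y = la a (mul x y). Proof. dB. apply Hmla. Qed.
Lemma mul_ra a x y : mul (ra x a) y = mul x (la a y). Proof. dB. apply Hmra. Qed.
Lemma ra_mul a x y : ra (mul x y) a = mul x (ra y a). Proof. dB. apply Hmra2. Qed.
Lemma st_pj : preserves_joins st. Proof. dB. exact Hstj. Qed.
Lemma stst x : st (st x) = x. Proof. dB. apply Hstst. Qed.
Lemma st_mul x y : st (mul x y) = mul (st y) (st x). Proof. dB. apply Hstmul. Qed.
Lemma st_lara a b x : st (la a (ra x b)) = la b (ra (st x) a). Proof. dB. apply Hstla. Qed.
Lemma meet_la a x y : meet (la a x) y = la a (meet x y). Proof. dB. apply Hmeetla. Qed.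
Lemma meet_ra a x y : meet (ra x a) y = ra (meet x y) a. Proof. dB. apply Hmeetra. Qed.

Lemma vs_pj : preserves_joins vs. Proof. destruct HS as [[h _] _]; exact h. Qed.
Lemma vs_top : vs 1 = top A. Proof. destruct HS as [[_ [h _]] _]; exact h. Qed.
Lemma vs_supp x y : le (la (vs x) y) (mul (mul x (st x)) y). Proof. destruct HS as [[_ [_ [h _]]] _]; apply h. Qed.
Lemma vs_fix x : la (vs x) x = x. Proof. destruct HS as [[_ [_ [_ h]]] _]; apply h. Qed.
Lemma vs_eq a x : vs (la a x) = meet a (vs x). Proof. destruct HS as [_ h]; apply h. Qed.

Lemma ups_fh : frame_hom ups. Proof. destruct HR as [h _]; exact h. Qed.
Lemma ups_pj : preserves_joins ups. Proof. destruct HR as [[h _] _]; exact h. Qed.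
Lemma ups_meet x y : ups (meet x y) = meet (ups x) (ups y). Proof. destruct HR as [[_ [_ h]] _]; apply h. Qed.
Lemma ups_la a : ups (la a 1) = a. Proof. destruct HR as [_ [h _]]; apply h. Qed.
Lemma ups_ra a : ups (ra 1 a) = a. Proof. destruct HR as [_ [_ h]]; apply h. Qed.

Lemma la_monol a b m : le a b -> le (la a m) (la b m). Proof. apply (pj_mono A Q _ (la_pjl m)). Qed.
Lemma la_monor a m n : le m n -> le (la a m) (la a n). Proof. apply (pj_mono Q Q _ (la_pjr a)). Qed.
Lemma ra_monol a m n : le m n -> le (ra m a) (ra n a). Proof. apply (pj_mono Q Q _ (ra_pjl a)). Qed.
Lemma ra_monor m a b : le a b -> le (ra m a) (ra m b). Proof. apply (pj_mono A Q _ (ra_pjr m)). Qed.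
Lemma mul_monol y x x' : le x x' -> le (mul x y) (mul x' y). Proof. apply (pj_mono Q Q _ (mul_pjl y)). Qed.
Lemma mul_monor x y y' : le y y' -> le (mul x y) (mul x y'). Proof. apply (pj_mono Q Q _ (mul_pjr x)). Qed.
Lemma mul_mono x x' y y' : le x x' -> le y y' -> le (mul x y) (mul x' y').
Proof. intros; eapply fr_trans; [apply mul_monol; eauto| apply mul_monor; auto]. Qed.
Lemma st_mono x y : le x y -> le (st x) (st y). Proof. apply (pj_mono Q Q _ st_pj). Qed.
Lemma vs_mono x y : le x y -> le (vs x) (vs y). Proof. apply (pj_mono Q A _ vs_pj). Qed.
Lemma ups_mono x y : le x y -> le (ups x) (ups y). Proof. apply (pj_mono Q A _ ups_pj). Qed.

Lemma st_le_iff x y : le (st x) (st y) <-> le x y.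
Proof. split; intro h. rewrite <- (stst x), <- (stst y); apply st_mono; auto. apply st_mono; auto. Qed.
Lemma st_le_swap x y : le (st x) y <-> le x (st y).
Proof. rewrite <- (st_le_iff x (st y)), stst. tauto. Qed.

Lemma st_top : st 1 = 1.
Proof. apply fr_anti. apply top_max. rewrite <- (stst 1) at 1. apply st_mono. apply top_max. Qed.

Lemma st_meet x y : st (meet x y) = meet (st x) (st y).
Proof.
  apply fr_anti.
  - apply meet_glb; apply st_mono; [apply meet_l|apply meet_r].
  - apply st_le_swap. apply meet_glb; apply st_le_swap; [apply meet_l|apply meet_r].
Qed.

Lemma la_le a x : le (la a x) x.
Proof. rewrite <- (la_top x) at 2. apply la_monol, top_max. Qed.
Lemma ra_le a x : le (ra x a) x.
Proof. rewrite <- (ra_top x) at 2. apply ra_monor, top_max. Qed.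

Lemma la_as_meet a x : la a x = meet (la a 1) x.
Proof. rewrite meet_la, meet_top_l. reflexivity. Qed.
Lemma ra_as_meet a x : ra x a = meet (ra 1 a) x.
Proof. rewrite meet_ra, meet_top_l. reflexivity. Qed.

Lemma st_la a x : st (la a x) = ra (st x) a.
Proof. rewrite <- (ra_top x) at 1. rewrite st_lara, la_top. reflexivity. Qed.
Lemma st_ra a x : st (ra x a) = la a (st x).
Proof. rewrite <- (la_top (ra x a)). rewrite st_lara, ra_top. reflexivity. Qed.
Lemma st_la1 a : st (la a 1) = ra 1 a.
Proof. rewrite st_la, st_top. reflexivity. Qed.

Lemma ups_lax a x : ups (la a x) = meet a (ups x).
Proof. rewrite la_as_meet, ups_meet, ups_la. reflexivity. Qed.
Lemma ups_rax a x : ups (ra x a) = meet (ups x) a.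
Proof. rewrite ra_as_meet, ups_meet, ups_ra, meet_comm. reflexivity. Qed.

Lemma vs_adj x b : le (vs x) b <-> le x (la b 1).
Proof.
  split; intro h.
  - rewrite <- (vs_fix x). eapply fr_trans. apply la_monol; exact h. apply la_monor, top_max.
  - assert (E : la b x = x).
    { apply fr_anti. apply la_le. rewrite la_as_meet. apply meet_glb; auto. apply fr_refl. }
    rewrite <- E, vs_eq. apply meet_l.
Qed.

Lemma le_mul1 z : le z (mul z 1).
Proof.
  assert (h : le (st z) (mul 1 (st z))).
  { pose proof (vs_supp (st z) (st z)) as h. rewrite vs_fix in h.
    eapply fr_trans; [exact h|]. apply mul_monol, top_max. }
  apply (proj1 (st_le_iff _ _)). rewrite st_mul, st_top. exact h.
Qed.

Lemma vs_mul1 w : le (vs (mul w 1)) (vs w).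
Proof.
  assert (E : mul w 1 = la (vs w) (mul w 1)).
  { rewrite <- mul_la, vs_fix. reflexivity. }
  rewrite E, vs_eq. apply meet_l.
Qed.

Lemma ra_vs_le x y : le (ra x (vs y)) (mul (mul x y) 1).
Proof.
  eapply fr_trans; [apply le_mul1|].
  rewrite mul_ra. eapply fr_trans. apply mul_monor. apply vs_supp.
  rewrite !massoc. apply mul_monor. apply mul_monor. apply top_max.
Qed.

Lemma F12 x y a : le (mul x y) (la a 1) -> le (ra x (vs y)) (la a 1).
Proof.
  intro h. apply vs_adj. eapply fr_trans. apply vs_mono, ra_vs_le.
  eapply fr_trans. apply vs_mul1. apply vs_adj; exact h.
Qed.

Lemma ra_vs_st x : ra x (vs (st x)) = x.
Proof. rewrite <- (stst x) at 1. rewrite <- st_la, vs_fix, stst. reflexivity. Qed.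


Lemma sup_le_sup (L : Frame) (S T : L -> Prop) :
  (forall x, S x -> exists y, T y /\ le x y) -> le (sup S) (sup T).
Proof. intro h. apply fr_lub. intros x hx. destruct (h x hx) as [y [hy hxy]].
  eapply fr_trans; [exact hxy| apply fr_ub; exact hy]. Qed.

Lemma ups_st x : ups (st x) = ups x.
Proof.
  pose (V := fun a => sup (fun z => exists x y, le (mul x y) a /\ z = meet (ups x) (ups (st y)))).
  assert (C1 : forall a, ups (st a) = V a).
  { intro a. rewrite <- (HU a) at 1. rewrite st_pj, ups_pj. apply fr_anti; apply sup_le_sup.
    - intros z [w [[v [[x0 [y0 [hxy ->]]] ->]] ->]].
      exists (meet (ups x0) (ups (st y0))). split. exists x0, y0; auto.
      rewrite st_la, ups_rax, meet_comm. apply fr_refl.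
    - intros z [x0 [y0 [hxy ->]]]. exists (ups (st (la (ups x0) y0))). split.
      exists (st (la (ups x0) y0)). split; auto. exists (la (ups x0) y0). split; auto.
      exists x0, y0; auto.
      rewrite st_la, ups_rax, meet_comm. apply fr_refl. }
  assert (C2 : forall a, ups a = V a).
  { intro a. rewrite <- (stst a) at 1. rewrite <- (HU (st a)) at 1. rewrite st_pj, ups_pj.
    apply fr_anti; apply sup_le_sup.
    - intros z [w [[v [[x0 [y0 [hxy ->]]] ->]] ->]].
      exists (meet (ups (st y0)) (ups (st (st x0)))). split.
      exists (st y0), (st x0). split; auto. rewrite <- st_mul. apply st_le_swap; auto.
      rewrite st_la, ups_rax, stst. apply fr_refl.
    - intros z [x0 [y0 [hxy ->]]]. exists (ups (st (la (ups (st y0)) (st x0)))). split.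
      exists (st (la (ups (st y0)) (st x0))). split; auto. exists (la (ups (st y0)) (st x0)). split; auto.
      exists (st y0), (st x0). split; auto. rewrite <- st_mul. apply st_mono; auto.
      rewrite st_la, ups_rax, stst. apply fr_refl. }
  rewrite C1, C2. reflexivity.
Qed.

Lemma right_unit a : sup (fun z => exists x y, le (mul x y) a /\ z = ra x (ups y)) = a.
Proof.
  transitivity (st (sup (fun z => exists x y, le (mul x y) (st a) /\ z = la (ups x) y))); [| rewrite HU; apply stst]. rewrite st_pj.
  apply fr_anti; apply sup_le_sup.
  - intros z [x0 [y0 [hxy ->]]]. exists (st (la (ups (st y0)) (st x0))). split.
    exists (la (ups (st y0)) (st x0)). split; auto.
    exists (st y0), (st x0). split; auto. rewrite <- st_mul. apply st_mono; auto.
    rewrite st_la, stst, ups_st. apply fr_refl.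
  - intros z [w [[x0 [y0 [hxy ->]]] ->]]. exists (ra (st y0) (ups (st x0))). split.
    exists (st y0), (st x0). split; auto. rewrite <- st_mul. apply st_le_swap; auto.
    rewrite st_la, ups_st. apply fr_refl.
Qed.


Notation T2' := (T2 A Q la ra).
Notation T3' := (T3 A Q la ra).
Notation tideal2' := (tideal2 A Q la ra).
Notation tideal3' := (tideal3 A Q la ra).
Notation tens' := (tens A Q la ra).
Notation tens3' := (tens3 A Q la ra).
Notation mstar' := (mstar A Q la ra mul).

Lemma T2_ext (I J : T2') : (forall p, proj1_sig I p <-> proj1_sig J p) -> I = J.
Proof.
  destruct I as [I HI], J as [J HJ]; simpl; intro h.
  assert (E : I = J). { extensionality p. apply propositional_extensionality. apply h. }
  subst J. f_equal. apply proof_irrelevance.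
Qed.
Lemma T3_ext (I J : T3') : (forall p, proj1_sig I p <-> proj1_sig J p) -> I = J.
Proof.
  destruct I as [I HI], J as [J HJ]; simpl; intro h.
  assert (E : I = J). { extensionality p. apply propositional_extensionality. apply h. }
  subst J. f_equal. apply proof_irrelevance.
Qed.

Lemma sup2_in (S : T2' -> Prop) (I : T2') p : S I -> proj1_sig I p -> proj1_sig (sup S) p.
Proof. intros hS hI J HJ HP. apply HP. exists I; auto. Qed.
Lemma sup2_elim (S : T2' -> Prop) (M : Q * Q -> Prop) p : tideal2' M ->
  (forall I, S I -> forall q, proj1_sig I q -> M q) -> proj1_sig (sup S) p -> M p.
Proof. intros HM' h H. apply (H M HM'). intros q [I [hI hq]]. exact (h I hI q hq). Qed.
Lemma sup3_ub (S : T3' -> Prop) (I : T3') : S I -> le I (sup S).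
Proof. intros hS p hp J HJ HP. apply HP. exists I; auto. Qed.
Lemma sup3_lub (S : T3' -> Prop) (R : T3') : (forall I, S I -> le I R) -> le (sup S) R.
Proof. intros h p H. apply (H (proj1_sig R) (proj2_sig R)). intros q [I [hI hq]]. exact (h I hI q hq). Qed.
Lemma le3_trans (I J K : T3') : le I J -> le J K -> le I K.
Proof. intros h1 h2 p hp. apply h2, h1, hp. Qed.
Lemma T3_anti (I J : T3') : le I J -> le J I -> I = J.
Proof. intros; apply T3_ext; split; auto. Qed.

Lemma tens_in x y : proj1_sig (tens' x y) (x, y).
Proof. intros J HJ HP. apply HP. reflexivity. Qed.
Lemma tens_elim x y (M : Q * Q -> Prop) p : tideal2' M -> M (x, y) -> proj1_sig (tens' x y) p -> M p.
Proof. intros HM' hm H. apply (H M HM'). intros q ->. exact hm. Qed.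
Lemma tens3_le x y z (R : T3') : proj1_sig R (x, y, z) -> le (tens3' x y z) R.
Proof. intros h p H. apply (H (proj1_sig R) (proj2_sig R)). intros q ->. exact h. Qed.

Lemma id_down (I : Q * Q -> Prop) x y x' y' : tideal2' I -> I (x, y) -> le x' x -> le y' y -> I (x', y').
Proof. intros [h _] ? ? ?; eapply h; eauto. Qed.
Lemma id_supl (I : Q * Q -> Prop) S y : tideal2' I -> (forall x, S x -> I (x, y)) -> I (sup S, y).
Proof. intros [_ [h _]]; apply h. Qed.
Lemma id_supr (I : Q * Q -> Prop) x S : tideal2' I -> (forall y, S y -> I (x, y)) -> I (x, sup S).
Proof. intros [_ [_ [h _]]]; apply h. Qed.
Lemma id_sat (I : Q * Q -> Prop) x a y : tideal2' I -> (I (ra x a, y) <-> I (x, la a y)).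
Proof. intros [_ [_ [_ h]]]; apply h. Qed.

Definition Mset (a : Q) : Q * Q -> Prop := fun p => le (mul (fst p) (snd p)) a.
Definition Jset (x : Q) : Q * Q -> Prop := fun p => le (ra (fst p) (vs (snd p))) x.
Definition Kset (y : Q) : Q * Q -> Prop := fun p => le (la (vs (st (fst p))) (snd p)) y.

Lemma M_ideal a : tideal2' (Mset a).
Proof.
  unfold Mset; split; [|split; [|split]]; simpl.
  - intros x y x' y' h h1 h2. eapply fr_trans; [apply mul_mono; eauto| exact h].
  - intros S y h. rewrite (mul_pjl y). apply fr_lub. intros z [x [hx ->]]. auto.
  - intros x S h. rewrite (mul_pjr x). apply fr_lub. intros z [y [hy ->]]. auto.
  - intros x b y. rewrite mul_ra. tauto.
Qed.

Lemma J_ideal x : tideal2' (Jset x).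
Proof.
  unfold Jset; split; [|split; [|split]]; simpl.
  - intros p q p' q' h h1 h2. eapply fr_trans; [|exact h].
    eapply fr_trans. apply ra_monol; exact h1. apply ra_monor, vs_mono; auto.
  - intros S q h. rewrite (ra_pjl (vs q)). apply fr_lub. intros z [p [hp ->]]. auto.
  - intros p S h. rewrite vs_pj, (ra_pjr p). apply fr_lub. intros z [c [[q [hq ->]] ->]]. auto.
  - intros p b q. rewrite <- ra_meet, vs_eq. tauto.
Qed.

Lemma K_ideal y : tideal2' (Kset y).
Proof.
  unfold Kset; split; [|split; [|split]]; simpl.
  - intros p q p' q' h h1 h2. eapply fr_trans; [|exact h].
    eapply fr_trans. apply la_monol, vs_mono, st_mono; exact h1. apply la_monor; auto.
  - intros S q h. rewrite st_pj, vs_pj, (la_pjl q). apply fr_lub.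
    intros z [c [[w [[p [hp ->]] ->]] ->]]. auto.
  - intros p S h. rewrite (la_pjr _). apply fr_lub. intros z [q [hq ->]]. auto.
  - intros p b q. rewrite st_ra, vs_eq, <- !la_meet, meet_comm. tauto.
Qed.

Lemma J_conv (I : Q * Q -> Prop) x p q : tideal2' I -> I (x, 1) -> le (ra p (vs q)) x -> I (p, q).
Proof.
  intros HI h hx. rewrite <- (vs_fix q). apply (id_sat I p (vs q) q HI).
  eapply id_down; eauto. apply top_max.
Qed.

Lemma K_conv (I : Q * Q -> Prop) y p q : tideal2' I -> I (1, y) -> le (la (vs (st p)) q) y -> I (p, q).
Proof.
  intros HI h hy. rewrite <- (ra_vs_st p). apply (id_sat I p (vs (st p)) q HI).
  eapply id_down; eauto. apply top_max.
Qed.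

Lemma JK_conv (I : Q * Q -> Prop) y x p q : tideal2' I -> I (y, x) ->
  le (ra p (vs q)) y -> le (la (vs (st p)) q) x -> I (p, q).
Proof.
  intros HI h hy hx. rewrite <- (ra_vs_st p). apply (id_sat I p (vs (st p)) q HI).
  set (q' := la (vs (st p)) q). rewrite <- (vs_fix q'). apply (id_sat I p (vs q') q' HI).
  eapply id_down; eauto. eapply fr_trans; [|exact hy]. apply ra_monor, vs_mono. apply la_le.
Qed.

Lemma mstar_mem a x y : proj1_sig (mstar' a) (x, y) <-> le (mul x y) a.
Proof.
  split.
  - intro h. change (Mset a (x, y)). unfold mstar in h. revert h.
    apply (sup2_elim _ (Mset a) (x, y) (M_ideal a)).
    intros I [x0 [y0 [hxy ->]]] q hq. eapply tens_elim; eauto. apply M_ideal.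
  - intro h. eapply sup2_in; [| apply tens_in]. exists x, y; auto.
Qed.

Lemma p1_mem x p q : proj1_sig (tens' x 1) (p, q) <-> le (ra p (vs q)) x.
Proof.
  split.
  - intro h. apply (tens_elim x 1 (Jset x) (p, q) (J_ideal x)); auto.
    unfold Jset; simpl. rewrite vs_top, ra_top. apply fr_refl.
  - intro h. apply (J_conv _ x); auto. apply (proj2_sig (tens' x 1)). apply tens_in.
Qed.

Lemma p2_mem y p q : proj1_sig (tens' 1 y) (p, q) <-> le (la (vs (st p)) q) y.
Proof.
  split.
  - intro h. apply (tens_elim 1 y (Kset y) (p, q) (K_ideal y)); auto.
    unfold Kset; simpl. rewrite st_top, vs_top, la_top. apply fr_refl.
  - intro h. apply (K_conv _ y); auto. apply (proj2_sig (tens' 1 y)). apply tens_in.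
Qed.

Lemma meet2_mem (I J : T2') p : proj1_sig (meet I J) p <-> proj1_sig I p /\ proj1_sig J p.
Proof.
  assert (Hid : tideal2' (fun q => proj1_sig I q /\ proj1_sig J q)).
  { destruct (proj2_sig I) as [a1 [a2 [a3 a4]]], (proj2_sig J) as [b1 [b2 [b3 b4]]].
    split; [|split; [|split]].
    - intros x y x' y' [h1 h2] ? ?; split; eauto.
    - intros S y h; split; [apply a2|apply b2]; intros; apply h; auto.
    - intros x S h; split; [apply a3|apply b3]; intros; apply h; auto.
    - intros x a y; rewrite a4, b4; tauto. }
  split.
  - intro h. change ((fun q => proj1_sig I q /\ proj1_sig J q) p). unfold meet in h. revert h.
    apply (sup2_elim _ _ p Hid). intros K [k1 k2] q hq. split; auto.
  - intro h. unfold meet. apply (sup2_in _ (exist _ _ Hid)); auto. simpl. split; intros q [? ?]; auto.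
Qed.

Lemma top2_mem p : proj1_sig (top T2') p.
Proof.
  assert (Hid : tideal2' (fun _ => True)). { split; [|split; [|split]]; simpl; intros; tauto. }
  unfold top. apply (sup2_in _ (exist _ _ Hid)); simpl; auto.
Qed.


Lemma img_comp {X Y Z : Type} (f : Y -> Z) (g : X -> Y) (S : X -> Prop) :
  img f (img g S) = img (fun x => f (g x)) S.
Proof.
  extensionality z. apply propositional_extensionality. split.
  - intros [y [[x [hx ->]] ->]]. exists x; auto.
  - intros [x [hx ->]]. exists (g x). split; auto. exists x; auto.
Qed.

Lemma tens_sat x b y : tens' (ra x b) y = tens' x (la b y).
Proof.
  apply T2_ext; intro p; split; intro h.
  - eapply tens_elim; [apply (proj2_sig (tens' x (la b y)))| |exact h].
    apply (id_sat _ _ _ _ (proj2_sig (tens' x (la b y)))). apply tens_in.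
  - eapply tens_elim; [apply (proj2_sig (tens' (ra x b) y))| |exact h].
    apply (id_sat _ _ _ _ (proj2_sig (tens' (ra x b) y))). apply tens_in.
Qed.

Lemma muA_eq a : muA_radj A Q la ra mul a = mstar' a.
Proof.
  apply T2_ext; intros [x y]. rewrite mstar_mem. split.
  - intro h. change (Mset a (x, y)). unfold muA_radj in h. revert h.
    apply (sup2_elim _ (Mset a) (x, y) (M_ideal a)).
    intros I hI [x0 y0] hq. unfold Mset; simpl. eapply fr_trans; [|exact hI].
    apply fr_ub. exists x0, y0; auto.
  - intro h. unfold muA_radj. apply (sup2_in _ (mstar' a)).
    + unfold muA, tlift. apply fr_lub. intros z [x0 [y0 [hq ->]]]. apply mstar_mem; auto.
    + apply mstar_mem; auto.
Qed.

Lemma main : open_involutive_category A Q la ra mul st ups.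
Proof using HB HS HR HM HU.
  unfold open_involutive_category.
  assert (Hd : frame_hom (dstar A Q la)).
  { split; [|split].
    - intro S. exact (la_pjl 1 S).
    - apply la_top.
    - intros a b. unfold dstar. rewrite la_meet, meet_la, meet_top_l. reflexivity. }
  assert (Hi : frame_hom (istar Q st)).
  { split; [|split]. exact st_pj. exact st_top. exact st_meet. }
  split; [exact Hd|].
  split.
  { split; [|split].
    - intro S. unfold rstar. destruct Hd as [Hd1 _]. rewrite (Hd1 S). unfold istar.
      rewrite st_pj, img_comp. reflexivity.
    - unfold rstar, istar, dstar. rewrite la_top. apply st_top.
    - intros a b. unfold rstar, istar. destruct Hd as [_ [_ Hd3]]. rewrite Hd3. apply st_meet. }
  split; [exact ups_fh|].
  split; [exact Hi|].
  split.
  { split; [|split].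
    - intro S. apply T2_ext; intros [p q]. unfold p1star. rewrite p1_mem. split.
      + intro h. apply (J_conv _ (sup S)); auto. apply proj2_sig.
        apply (id_supl _ _ _ (proj2_sig _)). intros x hx.
        apply (sup2_in _ (tens' x 1)). exists x; auto. apply tens_in.
      + intro h. change (Jset (sup S) (p, q)). revert h.
        apply (sup2_elim _ _ _ (J_ideal (sup S))). intros I [x [hx ->]] [p' q'] hq.
        apply p1_mem in hq. unfold Jset; simpl. eapply fr_trans; [exact hq| apply fr_ub; auto].
    - apply T2_ext; intros [p q]. unfold p1star. rewrite p1_mem. split; intros _.
      apply top2_mem. apply top_max.
    - intros x y. apply T2_ext; intros [p q]. unfold p1star.
      rewrite meet2_mem, !p1_mem, meet_le_iff. tauto. }
  split.
  { split; [|split].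
    - intro S. apply T2_ext; intros [p q]. unfold p2star. rewrite p2_mem. split.
      + intro h. apply (K_conv _ (sup S)); auto. apply proj2_sig.
        apply (id_supr _ _ _ (proj2_sig _)). intros y hy.
        apply (sup2_in _ (tens' 1 y)). exists y; auto. apply tens_in.
      + intro h. change (Kset (sup S) (p, q)). revert h.
        apply (sup2_elim _ _ _ (K_ideal (sup S))). intros I [y [hy ->]] [p' q'] hq.
        apply p2_mem in hq. unfold Kset; simpl. eapply fr_trans; [exact hq| apply fr_ub; auto].
    - apply T2_ext; intros [p q]. unfold p2star. rewrite p2_mem. split; intros _.
      apply top2_mem. apply top_max.
    - intros x y. apply T2_ext; intros [p q]. unfold p2star.
      rewrite meet2_mem, !p2_mem, meet_le_iff. tauto. }
  split.
  { split; [|split].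
    - intro S. assert (E : muA_radj A Q la ra mul = mstar').
      { extensionality a. apply muA_eq. }
      pose proof HM as HM'. unfold is_multiplicative in HM'. rewrite E in HM'. apply HM'.
    - apply T2_ext; intros [p q]. rewrite mstar_mem. split; intros _.
      apply top2_mem. apply top_max.
    - intros a b. apply T2_ext; intros [p q].
      rewrite meet2_mem, !mstar_mem, meet_le_iff. tauto. }
  split.
  { intro a. unfold p1star, p2star, rstar, istar, dstar. rewrite st_la1.
    rewrite tens_sat. reflexivity. }
  split. { intro a. unfold ustar, dstar. apply ups_la. }
  split. { intro a. unfold ustar, rstar, istar, dstar. rewrite st_la1. apply ups_ra. }
  split.
  { intro a. apply T2_ext; intros [p q]. unfold p1star, dstar. rewrite mstar_mem, p1_mem. split.
    - apply F12.
    - intro h. apply (mstar_mem (la a 1) p q). apply (J_conv _ (la a 1)); auto. apply proj2_sig.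
      apply mstar_mem. rewrite mul_la. apply la_monor, top_max. }
  split.
  { intro a. apply T2_ext; intros [p q]. unfold p2star, rstar, istar, dstar.
    rewrite st_la1, mstar_mem, p2_mem. split.
    - intro h. assert (h1 : le (mul (st q) (st p)) (la a 1)).
      { rewrite <- st_mul, <- (stst (la a 1)), st_la1. apply st_mono; auto. }
      apply F12 in h1. replace (la (vs (st p)) q) with (st (ra (st q) (vs (st p))))
        by (rewrite st_ra, stst; reflexivity). rewrite <- st_la1.
      apply st_mono; auto.
    - intro h. apply (mstar_mem (ra 1 a) p q). apply (K_conv _ (ra 1 a)); auto. apply proj2_sig.
      apply mstar_mem. rewrite <- ra_mul. apply ra_monol, top_max. }
  split.
  { intro a. apply T3_anti.
    - apply sup3_lub. intros I [x [y [hxy ->]]]. apply sup3_lub. intros t [x1 [x2 [h12 ->]]].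
      apply mstar_mem in hxy. apply mstar_mem in h12.
      eapply le3_trans; [| apply sup3_ub; exists x1, (mul x2 y); split; [|reflexivity]].
      + apply sup3_ub. exists x2, y. split; [|reflexivity]. apply mstar_mem, fr_refl.
      + apply mstar_mem. rewrite <- massoc. eapply fr_trans; [|exact hxy]. apply mul_monol; auto.
    - apply sup3_lub. intros I [x [y [hxy ->]]]. apply sup3_lub. intros t [y1 [y2 [h12 ->]]].
      apply mstar_mem in hxy. apply mstar_mem in h12.
      eapply le3_trans; [| apply sup3_ub; exists (mul x y1), y2; split; [|reflexivity]].
      + apply sup3_ub. exists x, y1. split; [|reflexivity]. apply mstar_mem, fr_refl.
      + apply mstar_mem. rewrite massoc. eapply fr_trans; [|exact hxy]. apply mul_monor; auto. }
  split.
  { intro a. transitivity (sup (fun z => exists x y, le (mul x y) a /\ z = la (ups x) y)); [|apply HU].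
    unfold pair_star, tlift, dstar, ustar. apply fr_anti; apply sup_le_sup.
    - intros z [x [y [h ->]]]. exists (la (ups x) y). split. exists x, y; split; auto.
      apply mstar_mem; auto. rewrite <- la_as_meet. apply fr_refl.
    - intros z [x [y [h ->]]]. exists (meet (la (ups x) 1) y). split. exists x, y; split; auto.
      apply mstar_mem; auto. rewrite <- la_as_meet. apply fr_refl. }
  split.
  { intro a. transitivity (sup (fun z => exists x y, le (mul x y) a /\ z = ra x (ups y))); [|apply right_unit].
    unfold pair_star, tlift, rstar, istar, dstar, ustar. apply fr_anti; apply sup_le_sup.
    - intros z [x [y [h ->]]]. exists (ra x (ups y)). split. exists x, y; split; auto.
      apply mstar_mem; auto. rewrite st_la1, meet_comm, <- ra_as_meet. apply fr_refl.
    - intros z [x [y [h ->]]]. exists (meet x (st (la (ups y) 1))). split. exists x, y; split; auto.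
      apply mstar_mem; auto. rewrite st_la1, meet_comm, <- ra_as_meet. apply fr_refl. }
  split. { intro x. apply stst. }
  split. { intro a. reflexivity. }
  split.
  { intro a. apply T2_ext; intros [p q]. unfold istar, pair_star, tlift, p1star, p2star.
    rewrite mstar_mem. split.
    - intro h. apply (sup2_in _ (meet (tens' 1 (st (st q))) (tens' (st (st p)) 1))).
      + exists (st q), (st p). split; auto. apply mstar_mem. rewrite <- st_mul. apply st_le_swap; auto.
      + apply meet2_mem. rewrite !stst, p2_mem, p1_mem. split; [apply la_le|apply ra_le].
    - intro h. change (Mset (st a) (p, q)). revert h.
      apply (sup2_elim _ _ _ (M_ideal (st a))). intros I [x [y [hxy ->]]] [p' q'] hq.
      apply meet2_mem in hq. destruct hq as [h2 h1]. apply p2_mem in h2. apply p1_mem in h1.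
      apply (JK_conv _ (st y) (st x)); auto. apply M_ideal.
      unfold Mset; simpl. rewrite <- st_mul. apply st_mono. apply mstar_mem; auto. }
  exists vs. split.
  - intros x b. apply vs_adj.
  - intros x b. unfold dstar. rewrite meet_comm, <- la_as_meet, vs_eq. apply meet_comm.
Qed.

End Main.

Theorem lemma5p2 (A Q : Frame) (la : A -> Q -> Q) (ra : Q -> A -> Q)
  (mul : Q -> Q -> Q) (st : Q -> Q) (vs ups : Q -> A) :
  is_based_quantal_frame A Q la ra mul st ->
  is_equivariant_support A Q la mul st vs ->
  is_reflexive A Q la ra ups ->
  is_multiplicative A Q la ra mul ->
  unit_laws A Q la mul ups ->
  open_involutive_category A Q la ra mul st ups.
Proof.
  intros HB HS HR HM HU. exact (main A Q la ra mul st vs ups HB HS HR HM HU).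
Qed.
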